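(* Fix a class $n$ and let $\bar\rho\equiv\sum_{m\ne n}\frac{r_m}{C_m}$. If $\bar\rho<1$, then the system is a Guaranteed Rate server to class $n$ with rate $R_n=(1-\bar\rho)C_n$ and error term $E_n=\sum_{m\neq n}\frac{\sigma_m}{(1-\bar\rho)C_m}$; i.e., for every packet $p^{f_n,i}$ of class $n$, $d^{f_n,i}\le GRC^{f_n,i}(R_n)+E_n$.
   Context: A multiclass FIFO system serves packets from $N$ classes (flows $f_1,\dots,f_N$). Class $m$ has constant service rate $C_m>0$. All packets, indexed in order of arrival (ties broken arbitrarily) as $p^{g,1},p^{g,2},\dots$ with arrival times $0\le a^{g,1}\le\cdots$ and lengths $l^{g,j}>0$, depart at $d^{g,j}=\max\{a^{g,j},d^{g,j-1}\}+l^{g,j}/C_{c(j)}$, $d^{g,0}=0$, $c(j)$ the class of $p^{g,j}$. The $i$-th packet of class $n$ is $p^{f_n,i}$ with arrival time $a^{f_n,i}$, departure time $d^{f_n,i}$, length $l^{f_n,i}$. $A_m(s,t)$ is the total length of class-$m$ packets arriving in $[s,t]$; each class satisfies $A_m(s,t)\le r_m(t-s)+\sigma_m$ for all $0\le s\le t$, with $r_m,\sigma_m\ge0$. The guaranteed rate clock for class $n$ with rate $R$ is $GRC^{f_n,0}=0$, $GRC^{f_n,i}(R)=\max\{a^{f_n,i},GRC^{f_n,i-1}(R)\}+l^{f_n,i}/R$. *)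

(* Defs.v *)
From HB Require Import structures.
From mathcomp Require Import all_boot all_order all_algebra.
Set Implicit Arguments. Unset Strict Implicit. Unset Printing Implicit Defensive.
Import Order.TTheory GRing.Theory Num.Theory.
Local Open Scope ring_scope.

(* Packets are indexed globally in arrival order by j = 0,1,...,K-1
   (paper's p^{g,j+1}).  Packet j has arrival time a j, length l j and
   class cls j : 'I_N.  C m is the service rate of class m. *)

(* dep_aux ... j = d^{g,j}, with dep_aux ... 0 = d^{g,0} = 0.
   The departure time of packet j (0-based) is dep_aux ... j.+1. *)
Fixpoint dep_aux (R : realFieldType) (N : nat) (C : 'I_N -> R)
    (a l : nat -> R) (cls : nat -> 'I_N) (j : nat) : R :=
  match j with
  | 0 => 0
  | j'.+1 => Num.max (a j') (dep_aux C a l cls j') + l j' / C (cls j')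
  end.

Definition dep (R : realFieldType) (N : nat) (C : 'I_N -> R)
    (a l : nat -> R) (cls : nat -> 'I_N) (j : nat) : R :=
  dep_aux C a l cls j.+1.

(* grc_aux ... j = GRC of the last class-n packet among packets 0..j-1
   (or GRC^{f_n,0} = 0 if there is none).  The guaranteed rate clock
   GRC^{f_n,i}(Rate) of a class-n packet with global index j is
   grc_aux ... j.+1. *)
Fixpoint grc_aux (R : realFieldType) (N : nat) (n : 'I_N) (Rate : R)
    (a l : nat -> R) (cls : nat -> 'I_N) (j : nat) : R :=
  match j with
  | 0 => 0
  | j'.+1 =>
      if cls j' == n
      then Num.max (a j') (grc_aux n Rate a l cls j') + l j' / Rate
      else grc_aux n Rate a l cls j'
  end.

Definition grc (R : realFieldType) (N : nat) (n : 'I_N) (Rate : R)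
    (a l : nat -> R) (cls : nat -> 'I_N) (j : nat) : R :=
  grc_aux n Rate a l cls j.+1.

Definition arr (R : realFieldType) (N : nat) (K : nat)
    (a l : nat -> R) (cls : nat -> 'I_N) (m : 'I_N) (s t : R) : R :=
  \sum_(j < K | (cls j == m) && (s <= a j <= t)) l j.

(* Main.v *)
Require Import Defs.
From HB Require Import structures.
From mathcomp Require Import all_boot all_order all_algebra.
From mathcomp Require Import ring lra.
Import Order.TTheory GRing.Theory Num.Theory.
Local Open Scope ring_scope.

Lemma busy_lem (R : realFieldType) (N : nat) (C : 'I_N -> R) (a l : nat -> R)
  (cls : nat -> 'I_N) : 0 <= a 0%N -> forall j, exists2 k, (k <= j)%N &
  dep_aux C a l cls j.+1 = a k + \sum_(k <= i < j.+1) l i / C (cls i).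
Proof.
move=> H0; elim=> [|j [k hk IH]].
  by exists 0%N => //; rewrite big_nat1 /= (max_idPl H0).
have -> : dep_aux C a l cls j.+2 =
  Num.max (a j.+1) (dep_aux C a l cls j.+1) + l j.+1 / C (cls j.+1) by [].
case: leP => h.
  exists k; first by apply: leqW.
  by rewrite big_nat_recr ?leqW // IH addrA.
by exists j.+1 => //; rewrite big_nat1.
Qed.

Lemma mono_lem (R : realFieldType) (K : nat) (a : nat -> R) :
  (forall j, (j.+1 < K)%N -> a j <= a j.+1) ->
  forall i j, (i <= j)%N -> (j < K)%N -> a i <= a j.
Proof.
move=> Hm i; elim=> [|j IH] hij hj.
  by move: hij; rewrite leqn0 => /eqP ->.
move: hij; rewrite leq_eqVlt => /orP [/eqP -> //|hij].
apply: le_trans (IH hij (ltnW hj)) (Hm _ hj).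
Qed.

Arguments mono_lem {R K a}.
Arguments busy_lem {R N C a l cls}.

Lemma grc_lem (R : realFieldType) (N : nat) (n : 'I_N) (Rt : R) (K : nat)
  (a l : nat -> R) (cls : nat -> 'I_N) :
  0 < Rt -> (forall j, (j.+1 < K)%N -> a j <= a j.+1) ->
  forall j, (j <= K)%N -> forall k, (k <= j)%N ->
  \sum_(k <= i < j | cls i == n) l i = 0 \/
  a k + (\sum_(k <= i < j | cls i == n) l i) / Rt <= grc_aux n Rt a l cls j.
Proof.
move=> HR Hm; elim=> [|j IH] hj k hk.
  by left; rewrite big_geq.
move: hk; rewrite leq_eqVlt => /orP [/eqP ->|hk].
  by left; rewrite big_geq.
have hkj : (k <= j)%N by [].
have IH' := IH (ltnW hj) k hkj.
rewrite big_mkcond big_nat_recr //= -big_mkcond.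
case: ifP => hc; last by rewrite addr0.
right; rewrite mulrDl addrA lerD2r.
have hak : a k <= a j by exact: (mono_lem Hm k j hkj hj).
case: IH' => [->|h].
  by rewrite mul0r addr0; apply: le_trans hak _; rewrite le_max lexx.
by apply: le_trans h _; rewrite le_max lexx orbT.
Qed.

Theorem theorem3 (R : realFieldType) (N : nat) (C r sigma : 'I_N -> R)
    (K : nat) (a l : nat -> R) (cls : nat -> 'I_N) (n : 'I_N) :
  (forall m, 0 < C m) ->
  (forall m, 0 <= r m) ->
  (forall m, 0 <= sigma m) ->
  (forall j, (j < K)%N -> 0 < l j) ->
  0 <= a 0%N ->
  (forall j, (j.+1 < K)%N -> a j <= a j.+1) ->
  (forall m s t, 0 <= s -> s <= t ->
     arr K a l cls m s t <= r m * (t - s) + sigma m) ->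
  let rho := \sum_(m < N | m != n) r m / C m in
  rho < 1 ->
  forall j, (j < K)%N -> cls j = n ->
    dep C a l cls j <=
      grc n ((1 - rho) * C n) a l cls j
      + \sum_(m < N | m != n) sigma m / ((1 - rho) * C m).
Proof.
move=> HC Hr Hs Hl Ha0 Hm Harr rho Hrho j hj hcj.
have [k hk Hd] := busy_lem (C:=C) (l:=l) (cls:=cls) Ha0 j.
set X := \sum_(k <= i < j.+1) l i / C (cls i) in Hd.
set T := fun m => \sum_(k <= i < j.+1 | cls i == m) l i.
have HX : X = \sum_(m < N) T m / C m.
  rewrite /X; transitivity (\sum_(k <= i < j.+1) \sum_(m < N)
     (if cls i == m then l i / C m else 0)).
    apply: eq_bigr => i _; rewrite (bigD1 (cls i)) //= eqxx big1 ?addr0 //.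
    by move=> m hm; rewrite eq_sym (negbTE hm).
  rewrite exchange_big /=; apply: eq_bigr => m _.
  by rewrite /T /= big_distrl /= [in RHS]big_mkcond.
have Hrho1 : 0 < 1 - rho by rewrite subr_gt0.
have HdA : a j <= dep C a l cls j.
  rewrite /dep /=; apply: (@le_trans _ _ (Num.max (a j) (dep_aux C a l cls j))).
    by rewrite le_max lexx.
  by rewrite lerDl divr_ge0 // ltW // Hl.
have hak : a k <= a j by apply: (mono_lem Hm).
have ha0k : 0 <= a k by apply: le_trans Ha0 (mono_lem Hm 0%N k (leq0n k) (leq_ltn_trans hk hj)).
have HT : forall m, T m <= r m * X + sigma m.
  move=> m; apply: (@le_trans _ _ (arr K a l cls m (a k) (a j))).
    have hjK : (j.+1 <= K)%N by [].
    have hkK : (k <= K)%N by apply: leq_trans hk (ltnW hj).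
    have hkj1 : (k <= j.+1)%N by apply: leqW.
    have nn : forall p q, (q <= K)%N -> forall P : pred nat,
        0 <= \sum_(p <= i < q | P i) l i.
      move=> p q hq P; rewrite big_nat_cond; apply: sumr_ge0 => i /andP [/andP [_ hi] _].
      by apply: ltW; apply: Hl; apply: leq_trans hi hq.
    rewrite /arr -(big_mkord (fun i => (cls i == m) && (a k <= a i <= a j)) l).
    rewrite (@big_cat_nat _ _ _ k 0 K _ _ (leq0n k) hkK) (@big_cat_nat _ _ _ j.+1 k K _ _ hkj1 hjK) /=.
    apply: (@le_trans _ _ (\sum_(k <= i < j.+1 | (cls i == m) && (a k <= a i <= a j)) l i)); last first.
      by rewrite addrCA lerDl addr_ge0 //; apply: nn.
    rewrite /T /= !big_mkcond /=.
    rewrite le_eqVlt; apply/orP; left; apply/eqP; rewrite [in RHS]big_mkcond; apply: eq_big_nat => i /andP [hki hij].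
    case: (cls i == m) => //=.
    have hiK : (i < K)%N by apply: leq_trans hij hjK.
    by rewrite (mono_lem Hm k i hki hiK) (mono_lem Hm i j hij hj).
  apply: le_trans (Harr _ _ _ ha0k hak) _.
  rewrite lerD2r ler_wpM2l //; rewrite /dep Hd in HdA; lra.
have Hsplit : X = T n / C n + \sum_(m < N | m != n) T m / C m.
  by rewrite HX (bigD1 n).
have Hb : \sum_(m < N | m != n) T m / C m <=
    X * rho + \sum_(m < N | m != n) sigma m / C m.
  rewrite /rho big_distrr -big_split /=; apply: ler_sum => m _.
  have e : X * (r m / C m) + sigma m / C m = (r m * X + sigma m) / C m.
    by rewrite mulrDl mulrA [X * r m]mulrC.
  by rewrite e ler_wpM2r // ?invr_ge0 ?ltW.
set S := \sum_(m < N | m != n) sigma m / C m in Hb.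
have H1 : (1 - rho) * X <= T n / C n + S.
  rewrite mulrBl mul1r; rewrite [rho * X]mulrC.
  move: Hb Hsplit; lra.
set Rt := (1 - rho) * C n.
set E := \sum_(m < N | m != n) sigma m / ((1 - rho) * C m).
have HRt : 0 < Rt by rewrite mulr_gt0.
have Hid : (1 - rho) * (T n / Rt + E) = T n / C n + S.
  rewrite mulrDr /E /S mulr_sumr; congr (_ + _).
    rewrite /Rt; field; apply/andP; split; rewrite lt0r_neq0 //.
  apply: eq_bigr => m _; field; apply/andP; split; rewrite lt0r_neq0 //.
have HX2 : X <= T n / Rt + E by rewrite -(ler_pM2l Hrho1) Hid.
have Tpos : 0 < T n.
  have nn2 : 0 <= \sum_(k <= i < j | cls i == n) l i.
    rewrite big_nat_cond; apply: sumr_ge0 => i /andP [/andP [_ hi] _].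
    by apply: ltW; apply: Hl; apply: ltn_trans hi hj.
  have := Hl j hj; rewrite /T /= big_mkcond big_nat_recr //= -big_mkcond /= hcj eqxx.
  move: nn2; lra.
have [h0|hg] := @grc_lem _ _ n Rt K a l cls HRt Hm j.+1 hj k (leqW hk).
  by move: Tpos; rewrite /T /= h0 ltxx.
rewrite /dep Hd /grc.
apply: le_trans (_ : a k + (T n / Rt + E) <= _); first by rewrite lerD2l.
by rewrite addrA lerD2r.
Qed.
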